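(* Let $\Theta$ and $\Theta'$ be two flow rules defined respectively by positive measurable functions $\phi$ and $\phi'$ via $\Theta_T(i) = \phi(T[i]) / \sum_{j=1}^{\nu_T(\varnothing)} \phi(T[j])$ and $\Theta'_T(i) = \phi'(T[i]) / \sum_{j=1}^{\nu_T(\varnothing)} \phi'(T[j])$ for $1 \leq i \leq \nu_T(\varnothing)$. Then $\Theta_T = \Theta'_T$ almost surely if and only if the functions $\phi$ and $\phi'$ are proportional.
   Context: Trees are rooted, planar, locally finite, leafless trees (Neveu formalism: subsets of finite words on $\{1,2,\dots\}$ containing the root $\varnothing$), each vertex $x$ carrying a non-negative real mark. For a vertex $x$ of a marked tree $t$, $t[x]$ is the reindexed marked subtree rooted at $x$, and $\nu_t(x)$ is the number of children of $x$. Let $\mathbf{p}=(p_k)_{k\ge0}$ be a reproduction law with $p_0 = 0$, $p_1 < 1$ and finite mean $m$, and let $\Gamma$ be a random variable with values in $\mathbb{R}_+$. A $(\Gamma,\mathbf{p})$-Galton-Watson tree $T$ is a Galton-Watson tree with reproduction law $\mathbf{p}$ carrying i.i.d. marks distributed as $\Gamma$; its law is denoted $\mathrm{GW}$. A flow on a tree $t$ is a function $\theta: t\to[0,1]$ with $\theta(\varnothing)=1$ and $\theta(x)=\sum_{i=1}^{\nu_t(x)}\theta(xi)$; a ($\mathrm{GW}$-)flow rule is a measurable map $t\mapsto\Theta_t$, defined on a Borel set of full $\mathrm{GW}$-measure, assigning to each tree a flow with $\Theta_t(x)>0$ for all $x$ and satisfying the consistency relation $\Theta_{t[x]}(y)=\Theta_t(xy)/\Theta_t(x)$.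 Here $\phi$ and $\phi'$ are measurable positive functions defined on a Borel set of marked leafless trees of full $\mathrm{GW}$-measure, and the flow rules are determined on the first generation by the displayed formula and extended by consistency. *)

(* Defs.v *)
From HB Require Import structures.
From mathcomp Require Import all_boot all_order all_algebra.
From mathcomp Require Import all_classical all_reals all_analysis.
Set Implicit Arguments. Unset Strict Implicit. Unset Printing Implicit Defensive.
Import Order.TTheory GRing.Theory Num.Theory.
Local Open Scope classical_set_scope.
Local Open Scope ring_scope.

(* Words of the Neveu/Ulam-Harris formalism, written root-first:
   the word i1 i2 ... in is the list [:: i1; i2; ...; in], children are
   labelled 1, 2, ..., nu. *)
Definition word := seq nat.

(* A (raw) marked labelling: number of children and mark at every word. *)
Definition lab (R : Type) := ((word -> nat) * (word -> R))%type.

Fixpoint in_tree (nu : word -> nat) (x : word) : bool :=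
  match x with
  | [::] => true
  | i :: y => (0 < i <= nu [::])%N && in_tree (fun z => nu (i :: z)) y
  end.

Definition subtree R (t : lab R) (x : word) : lab R :=
  (fun y => t.1 (x ++ y), fun y => t.2 (x ++ y)).

(* canonical representative of the marked tree generated by a labelling:
   values outside the tree are set to 0 *)
Definition prune (R : realType) (t : lab R) : lab R :=
  (fun x => if in_tree t.1 x then t.1 x else 0%N,
   fun x => if in_tree t.1 x then t.2 x else 0).

Definition lab_gen (R : realType) : set (set (lab R)) :=
  [set A | exists x k, A = [set t | t.1 x = k]] `|`
  [set A | exists x (B : set R), measurable B /\ A = [set t | B (t.2 x)]].

Definition lab_measurable (R : realType) (f : lab R -> R) : Prop :=
  forall B : set R, measurable B -> <<s @lab_gen R >> (f @^-1` B).

(* The flow rule determined by phi on the first generation,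
   Theta_t(i) = phi(t[i]) / sum_{j=1}^{nu_t(root)} phi(t[j]),
   extended to all vertices by the consistency relation
   Theta_t(i y) = Theta_t(i) * Theta_{t[i]}(y). *)
Fixpoint flow_of (R : realType) (phi : lab R -> R) (t : lab R) (x : word) : R :=
  match x with
  | [::] => 1
  | i :: y => phi (subtree t [:: i]) /
              (\sum_(1 <= j < (t.1 [::]).+1) phi (subtree t [:: j]))
              * flow_of phi (subtree t [:: i]) y
  end.

Definition mutually_independent (d : measure_display) (Omega : measurableType d)
  (R : realType) (P : probability Omega R) (I : eqType)
  (E : I -> set (set Omega)) : Prop :=
  forall (F : seq I) (A : I -> set Omega), uniq F ->
    (forall i, i \in F -> E i (A i)) ->
    fine (P (\bigcap_(i in [set` F]) A i)) = \prod_(i <- F) fine (P (A i)).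

Definition gw_sigma (d : measure_display) (Omega : measurableType d)
  (R : realType) (N : word -> Omega -> nat) (G : word -> Omega -> R)
  (i : word * bool) : set (set Omega) :=
  if i.2 then [set A | exists B : set R, measurable B /\ A = G i.1 @^-1` B]
  else [set A | exists B : set nat, A = N i.1 @^-1` B].

Definition gw_tree (Omega : Type) (R : realType) (N : word -> Omega -> nat)
  (G : word -> Omega -> R) (w : Omega) : lab R :=
  prune (fun x => N x w, fun x => G x w).

(* Main.v *)
Require Import Defs.
From HB Require Import structures.
From mathcomp Require Import all_boot all_order all_algebra.
From mathcomp Require Import all_classical all_reals all_analysis.
From mathcomp Require Import measurable_realfun lra.
Import Order.TTheory GRing.Theory Num.Theory.
Local Open Scope classical_set_scope.
Local Open Scope ring_scope.

Lemma in_tree_ext (nu nu' : word -> nat) x :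
  nu =1 nu' -> in_tree nu x = in_tree nu' x.
Proof.
elim: x nu nu' => [//|i y IH] nu nu' e /=.
by rewrite e (IH _ (fun z => nu' (i :: z))) // => z; exact: e.
Qed.

Lemma in_tree_cat (nu : word -> nat) v y :
  in_tree nu (v ++ y) = in_tree nu v && in_tree (fun z => nu (v ++ z)) y.
Proof.
elim: v nu => [//|i v IH] nu /=.
by rewrite IH andbA.
Qed.

Lemma subtree_prune (R : realType) (t : lab R) v :
  in_tree t.1 v -> subtree (prune t) v = prune (subtree t v).
Proof.
move=> Hv; rewrite /subtree /prune /=; congr pair; apply: funext => y;
  by rewrite in_tree_cat Hv.
Qed.

Lemma in_tree_prune (R : realType) (t : lab R) v :
  in_tree (prune t).1 v = in_tree t.1 v.
Proof.
elim: v t => [//|i y IH] t /=.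
case Hi: (0 < i <= t.1 [::])%N => //=.
rewrite -(IH (subtree t [:: i])).
by apply: in_tree_ext => z /=.
Qed.

Lemma flow_prop (R : realType) (phi phi' : lab R -> R) (c : R) :
  c != 0 -> forall t : lab R,
  (forall v, in_tree t.1 v -> phi' (subtree t v) = c * phi (subtree t v)) ->
  forall x, in_tree t.1 x -> flow_of phi t x = flow_of phi' t x.
Proof.
move=> c0 t Hv x; elim: x t Hv => [//|i y IH] t Hv /= /andP[Hi Hy].
rewrite (IH (subtree t [:: i])) //; last first.
  by move=> v Hv'; apply: (Hv (i :: v)); rewrite /= Hi.
congr (_ * _).
have -> : phi' (subtree t [:: i]) = c * phi (subtree t [:: i]).
  by apply: (Hv [:: i]); rewrite /= Hi.
have -> : \sum_(1 <= j < (t.1 [::]).+1) phi' (subtree t [:: j]) =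
          c * \sum_(1 <= j < (t.1 [::]).+1) phi (subtree t [:: j]).
  rewrite mulr_sumr; apply: eq_big_nat => j /andP[j1 j2].
  by apply: (Hv [:: j]); rewrite /= j1 -ltnS j2.
by rewrite invfM mulrACA divff // mul1r.
Qed.

HB.instance Definition _ (R : realType) := gen_eqMixin (lab R).
HB.instance Definition _ (R : realType) := gen_choiceMixin (lab R).
HB.instance Definition _ (R : realType) :=
  isPointed.Build (lab R) (fun _ => 0%N, fun _ => 0%R).

Section Meas.
Context (R : realType).
Local Notation L := (g_sigma_algebraType (@lab_gen R)).

Lemma mL_eq : @measurable _ L = <<s @lab_gen R >>.
Proof. by []. Qed.

Lemma mL_nat x (K : set nat) : measurable ([set t | K (t.1 x)] : set L).
Proof.
have -> : [set t : L | K (t.1 x)] = \bigcup_(k in K) [set t : L | t.1 x = k].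
  apply/seteqP; split => [t Kt|t [k Kk Hk]]; first by exists (t.1 x).
  by rewrite /= Hk.
apply: bigcup_measurable => k _; apply: sub_sigma_algebra; left; exists x, k.
by [].
Qed.

Lemma mL_real x (B : set R) : measurable B ->
  measurable ([set t | B (t.2 x)] : set L).
Proof. by move=> mB; apply: sub_sigma_algebra; right; exists x, B. Qed.

Lemma mL_const (c : Prop) : measurable ([set _ | c] : set L).
Proof.
case: (pselect c) => hc.
  by rewrite (_ : [set _ | c] = setT) //; apply/seteqP; split.
by rewrite (_ : [set _ | c] = set0) //; apply/seteqP; split.
Qed.

Lemma mL_if (T : Type) (b : L -> bool) (f g : L -> T) (Q : T -> Prop) :
  measurable [set t : L | b t] -> measurable [set t : L | Q (f t)] ->
  measurable [set t : L | Q (g t)] ->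
  measurable [set t : L | Q (if b t then f t else g t)].
Proof.
move=> mb mf mg.
have -> : [set t : L | Q (if b t then f t else g t)] =
  ([set t : L | b t] `&` [set t | Q (f t)]) `|`
  (~` [set t : L | b t] `&` [set t | Q (g t)]).
  apply/seteqP; split => t /=.
    case: (b t) => H.
      by left.
    by right.
  case: (b t); case; case => //.
apply: measurableU; apply: measurableI => //; exact: measurableC.
Qed.

Lemma mL_in_tree y : forall (h : L -> word -> nat),
  (forall z (K : set nat), measurable [set t : L | K (h t z)]) ->
  measurable [set t : L | in_tree (h t) y].
Proof.
elim: y => [|i y IH] h Hh /=.
  by rewrite (_ : [set t : L | true] = setT) //; apply/seteqP; split.
have -> : [set t : L | (0 < i <= h t [::])%N && in_tree (fun z => h t (i :: z)) y]
  = [set t : L | (fun k => (0 < i <= k)%N : Prop) (h t [::])] `&`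
    [set t : L | in_tree (fun z => h t (i :: z)) y].
  by apply/seteqP; split => t /=; [move/andP|move=> [-> ->]].
apply: measurableI; first exact: (Hh [::] (fun k => (0 < i <= k)%N : Prop)).
exact: (IH (fun t z => h t (i :: z)) (fun z K => Hh (i :: z) K)).
Qed.

Lemma mL_in_tree1 x : measurable [set t : L | in_tree t.1 x].
Proof. by apply: (mL_in_tree x (fun t : L => t.1)) => z K; exact: mL_nat. Qed.



Lemma measurable_prune : @measurable_fun _ _ L L setT (@prune R).
Proof.
refine (@measurability _ _ L L setT (@prune R) (@lab_gen R) (@mL_eq) _).
move=> _ [S GS <-]; rewrite setTI.
case: GS => [[x [k ->]]|[x [B [mB ->]]]].
- apply: (@mL_if nat (fun t => in_tree t.1 x) (fun t => t.1 x) (fun _ => 0%N)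
     (fun n => n = k)); [exact: mL_in_tree1| |exact: mL_const].
  exact: (mL_nat x (fun n => n = k)).
- apply: (@mL_if R (fun t => in_tree t.1 x) (fun t => t.2 x) (fun _ => 0)
     B); [exact: mL_in_tree1| exact: mL_real|exact: mL_const].
Qed.

Lemma measurable_phi (phi : lab R -> R) :
  lab_measurable phi -> @measurable_fun _ _ L R setT phi.
Proof. by move=> H _ B mB; rewrite setTI; exact: H. Qed.

End Meas.

Set Implicit Arguments. Unset Strict Implicit. Unset Printing Implicit Defensive.

Section Cyl.
Context (R : realType).
Local Notation L := (g_sigma_algebraType (@lab_gen R)).

Definition cyl (F : seq (word * bool)) (K : word -> set nat) (B : word -> set R)
  : set L :=
  [set t | forall i, i \in F -> if i.2 then B i.1 (t.2 i.1) else K i.1 (t.1 i.1)].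

Definition PiL (I : set (word * bool)) : set (set L) :=
  [set S | exists F K B, [/\ (forall i, i \in F -> I i),
     (forall x, measurable (B x)) & S = cyl F K B]].

Lemma cyl_undup F K B : cyl (undup F) K B = cyl F K B.
Proof.
by apply/seteqP; split => t H i Hi; apply: H; rewrite ?mem_undup in Hi *.
Qed.

Lemma cyl_nil K B : cyl [::] K B = setT.
Proof. by apply/seteqP; split => t // _ i; rewrite in_nil. Qed.

Lemma cyl_cons i F K B : cyl (i :: F) K B =
  [set t : L | if i.2 then B i.1 (t.2 i.1) else K i.1 (t.1 i.1)] `&` cyl F K B.
Proof.
apply/seteqP; split => t.
  by move=> H; split; [apply: H; rewrite mem_head|move=> j Hj; apply: H; rewrite in_cons Hj orbT].
by move=> [H1 H2] j; rewrite in_cons => /orP[/eqP ->|Hj] //; exact: H2.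
Qed.

Lemma measurable_cyl F K B : (forall x, measurable (B x)) -> measurable (cyl F K B).
Proof.
move=> mB; elim: F => [|[x b] F IH]; first by rewrite cyl_nil.
rewrite cyl_cons; apply: measurableI => //=.
case: b; [exact: mL_real|exact: mL_nat].
Qed.

Lemma PiL_setT I : PiL I setT.
Proof.
exists [::], (fun _ => setT), (fun _ => setT); split => //.
by rewrite cyl_nil.
Qed.

Definition mergeK (F1 F2 : seq (word * bool)) (K1 K2 : word -> set nat) x :=
  (if (x, false) \in F1 then K1 x else setT) `&`
  (if (x, false) \in F2 then K2 x else setT).
Definition mergeB (F1 F2 : seq (word * bool)) (B1 B2 : word -> set R) x :=
  (if (x, true) \in F1 then B1 x else setT) `&`
  (if (x, true) \in F2 then B2 x else setT).

Lemma cyl_setI F1 F2 K1 K2 B1 B2 : cyl F1 K1 B1 `&` cyl F2 K2 B2 =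
  cyl (F1 ++ F2) (mergeK F1 F2 K1 K2) (mergeB F1 F2 B1 B2).
Proof.
apply/seteqP; split => t.
- move=> [h1 h2] [x b] /= Hi; have {}h1 := h1 (x, b); have {}h2 := h2 (x, b).
  rewrite /mergeK /mergeB.
  case: b Hi h1 h2 => /= Hi h1 h2; split.
  + by case: ifP => // H; apply: h1.
  + by case: ifP => // H; apply: h2.
  + by case: ifP => // H; apply: h1.
  + by case: ifP => // H; apply: h2.
- move=> h; split => [[x b] Hi|[x b] Hi].
  + have := h (x, b); rewrite mem_cat Hi /= => /(_ isT).
    by rewrite /mergeK /mergeB; case: b Hi => /= Hi [+ _]; rewrite Hi.
  + have := h (x, b); rewrite mem_cat Hi orbT /= => /(_ isT).
    by rewrite /mergeK /mergeB; case: b Hi => /= Hi [_ +]; rewrite Hi.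
Qed.

Lemma measurable_mergeB F1 F2 B1 B2 : (forall x, measurable (B1 x)) ->
  (forall x, measurable (B2 x)) -> forall x, measurable (mergeB F1 F2 B1 B2 x).
Proof. by move=> m1 m2 x; apply: measurableI; case: ifP. Qed.

Lemma PiL_setI I : setI_closed (PiL I).
Proof.
move=> _ _ [F1 [K1 [B1 [I1 mB1 ->]]]] [F2 [K2 [B2 [I2 mB2 ->]]]].
exists (F1 ++ F2), (mergeK F1 F2 K1 K2), (mergeB F1 F2 B1 B2); split.
- by move=> i; rewrite mem_cat => /orP[/I1|/I2].
- exact: measurable_mergeB.
- exact: cyl_setI.
Qed.

Lemma PiL_measurable I : PiL I `<=` measurable.
Proof. by move=> _ [F [K [B [_ mB ->]]]]; exact: measurable_cyl. Qed.

Lemma PiL_gen : @measurable _ L = <<s PiL setT >>.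
Proof.
apply/seteqP; split.
- apply: smallest_sub; first exact: smallest_sigma_algebra.
  move=> _ [[x [k ->]]|[x [B [mB ->]]]]; apply: sub_sigma_algebra.
  + exists [:: (x, false)], (fun _ => [set k]), (fun _ => setT); split => //.
    apply/seteqP; split => t.
      by move=> Hk i; rewrite mem_seq1 => /eqP ->.
    by move/(_ (x, false)); rewrite mem_seq1 eqxx => /(_ isT).
  + exists [:: (x, true)], (fun _ => setT), (fun _ => B); split => //.
    apply/seteqP; split => t.
      by move=> Hk i; rewrite mem_seq1 => /eqP ->.
    by move/(_ (x, true)); rewrite mem_seq1 eqxx => /(_ isT).
- apply: smallest_sub; first exact: smallest_sigma_algebra.
  exact: PiL_measurable.
Qed.

End Cyl.

Section Omega.
Context (R : realType) (d : measure_display) (Omega : measurableType d)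
  (P : probability Omega R) (p : nat -> R) (N : word -> Omega -> nat)
  (G : word -> Omega -> R).
Hypothesis mN : forall x k, measurable [set w | N x w = k].
Hypothesis mG : forall x, measurable_fun setT (G x).
Hypothesis PN : forall x k, P [set w | N x w = k] = (p k)%:E.
Hypothesis PG : forall x (B : set R), measurable B ->
  P (G x @^-1` B) = P (G [::] @^-1` B).
Hypothesis indep : mutually_independent P (gw_sigma N G).
Local Notation L := (g_sigma_algebraType (@lab_gen R)).

Definition fam (u : word) (w : Omega) : L :=
  (fun x => N (u ++ x) w, fun x => G (u ++ x) w).

Let Nset_bigcup x (K : set nat) :
  N x @^-1` K = \bigcup_(k in K) [set w | N x w = k].
Proof.
apply/seteqP; split => [w Kw|w [k Kk Hk]]; first by exists (N x w).
by rewrite /preimage /= Hk.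
Qed.

Lemma mNset x (K : set nat) : measurable (N x @^-1` K).
Proof. by rewrite Nset_bigcup; apply: bigcup_measurable => k _; exact: mN. Qed.

Lemma PNset x K : P (N x @^-1` K) = P (N [::] @^-1` K).
Proof.
have tI y : trivIset K (fun k => [set w | N y w = k]).
  apply/trivIsetP => i j _ _ ij; apply/seteqP; split => // w [/= -> H].
  by move/eqP: ij; rewrite H.
have E y : P (\bigcup_(k in K) [set w | N y w = k]) =
    (\sum_(i <oo | i \in K) P [set w | N y w = i])%E.
  by apply: measure_bigcup => [k _|]; [exact: mN|exact: tI].
by rewrite !Nset_bigcup !E; apply: eq_eseriesr => k _; rewrite !PN.
Qed.

Lemma measurable_fam u : @measurable_fun _ _ Omega L setT (fam u).
Proof.
refine (@measurability _ _ Omega L setT (fam u) (@lab_gen R) (@mL_eq R) _).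
move=> _ [S GS <-]; rewrite setTI.
case: GS => [[x [k ->]]|[x [B [mB ->]]]].
- exact: mN.
- by have := mG (u ++ x) measurableT mB; rewrite setTI.
Qed.

Lemma measurable_fam_pre u (S : set L) : measurable S ->
  measurable (fam u @^-1` S).
Proof. by move=> mS; rewrite -[X in measurable X]setTI; exact: measurable_fam. Qed.

Definition ev u (K : word -> set nat) (B : word -> set R) (i : word * bool)
  : set Omega :=
  if i.2 then G (u ++ i.1) @^-1` B i.1 else N (u ++ i.1) @^-1` K i.1.

Lemma P_ev u K B i : measurable (B i.1) -> P (ev u K B i) = P (ev [::] K B i).
Proof.
case: i => x [] /= mB.
  by transitivity (P (G [::] @^-1` B x)); [exact: PG | exact/esym/PG].
by transitivity (P (N [::] @^-1` K x)); [exact: PNset | exact/esym/PNset].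
Qed.

Lemma core u F K B : uniq F -> (forall x, measurable (B x)) ->
  P (fam u @^-1` cyl F K B) = (\prod_(i <- F) fine (P (ev [::] K B i)))%:E.
Proof.
move=> uF mB.
pose sh := fun i : word * bool => (u ++ i.1, i.2).
have inj_sh : injective sh.
  move=> [a b] [a' b'] [] /(congr1 (drop (size u))).
  by rewrite !drop_size_cat // => -> ->.
pose A := fun j : word * bool => if j.2 then G j.1 @^-1` B (drop (size u) j.1)
  else N j.1 @^-1` K (drop (size u) j.1).
have AE i : A (sh i) = ev u K B i by rewrite /A /sh /ev /= drop_size_cat.
have hE : forall j, j \in map sh F -> gw_sigma N G j (A j).
  move=> [y [|]] _; rewrite /gw_sigma /A /=.
    by exists (B (drop (size u) y)).
  by exists (K (drop (size u) y)).
have := @indep (map sh F) A _ hE; rewrite ?map_inj_uniq // => Hind.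
have SE : fam u @^-1` cyl F K B = \bigcap_(j in [set` map sh F]) A j.
  apply/seteqP; split => w.
  - move=> H j /= /mapP[i Hi ->]; rewrite AE; have := H i Hi.
    by case: i Hi => x [].
  - move=> H i Hi; have := H (sh i); rewrite /= AE => /(_ (map_f sh Hi)).
    by case: i Hi => x [].
have mS : measurable (fam u @^-1` cyl F K B).
  by apply: measurable_fam_pre; exact: measurable_cyl.
rewrite -[LHS]fineK; last exact: fin_num_measure.
rewrite SE Hind; last exact: uF.
rewrite (big_map sh xpredT (fun j => fine (P (A j)))).
congr (_%:E); apply: eq_bigr => i _.
by rewrite AE P_ev.
Qed.

Definition lawm (u : word) (S : set L) : \bar R := P (fam u @^-1` S).

Let lawm0 u : lawm u set0 = 0%E.
Proof. by rewrite /lawm preimage_set0 measure0. Qed.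

Let lawm_ge0 u S : (0 <= lawm u S)%E.
Proof. exact: measure_ge0. Qed.

Let lawm_sa u : semi_sigma_additive (lawm u).
Proof.
move=> F mF tF mUF; rewrite /lawm preimage_bigcup.
apply: measure_semi_sigma_additive.
- by move=> n; exact: measurable_fam_pre.
- apply/trivIsetP => /= i j _ _ ij; rewrite -preimage_setI.
  by move/trivIsetP : tF => /(_ _ _ _ _ ij) ->//; rewrite preimage_set0.
- by rewrite -preimage_bigcup; exact: measurable_fam_pre.
Qed.

HB.instance Definition _ u := isMeasure.Build _ L R (lawm u)
  (@lawm0 u) (@lawm_ge0 u) (@lawm_sa u).

Lemma law u (S : set L) : measurable S ->
  P (fam u @^-1` S) = P (fam [::] @^-1` S).
Proof.
move=> mS.
have := @measure_unique _ R L (PiL setT) (fun _ => setT) (@PiL_gen R)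
  (@PiL_setI R setT) (fun _ => PiL_setT _ _) _ (lawm u) (lawm [::]) _ _ S mS.
apply.
- by apply/seteqP; split => // w _; exists 0%N.
- move=> _ [F [K [B [_ mB ->]]]]; rewrite /lawm -cyl_undup.
  exact: (etrans (@core u (undup F) K B (undup_uniq F) mB) (esym (@core [::] (undup F) K B (undup_uniq F) mB))).
- move=> k; rewrite /lawm.
  have := fin_num_measure P _ (measurable_fam_pre u (@measurableT _ L)).
  by move/fin_numPlt/andP => [].
Qed.

Definition PiO (I : set (word * bool)) : set (set Omega) :=
  [set fam [::] @^-1` S | S in PiL I].

Lemma PiO_setI I : setI_closed (PiO I).
Proof.
move=> _ _ [S1 H1 <-] [S2 H2 <-]; exists (S1 `&` S2).
  exact: PiL_setI.
by rewrite preimage_setI.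
Qed.

Lemma PiO_meas I : PiO I `<=` measurable.
Proof. move=> _ [S HS <-]; apply: measurable_fam_pre; exact: PiL_measurable HS. Qed.

Lemma PiO_setT I : PiO I setT.
Proof. by exists setT; [exact: PiL_setT | rewrite preimage_setT]. Qed.

Lemma sPiO_meas I : <<s PiO I >> `<=` measurable.
Proof. apply: smallest_sub; [exact: sigma_algebra_measurable | exact: PiO_meas]. Qed.

Lemma Pfin (A : set Omega) : measurable A -> P A = (fine (P A))%:E.
Proof. by move=> mA; rewrite fineK //; exact: fin_num_measure. Qed.

Lemma Plty (A : set Omega) : measurable A -> (P A < +oo)%E.
Proof. by move=> mA; have /fin_numPlt/andP[] := fin_num_measure P _ mA. Qed.

Lemma indep_base I J : (forall i, I i -> J i -> False) ->
  forall A B, PiO I A -> PiO J B -> P (A `&` B) = (P A * P B)%E.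
Proof.
move=> IJ _ _ [_ [F1 [K1 [B1 [I1 mB1 ->]]]] <-] [_ [F2 [K2 [B2 [I2 mB2 ->]]]] <-].
rewrite -preimage_setI -(cyl_undup F1) -(cyl_undup F2) cyl_setI.
have u1 := undup_uniq F1; have u2 := undup_uniq F2.
have dis : forall i, i \in undup F1 -> i \in undup F2 -> False.
  by move=> i; rewrite !mem_undup => /I1 h1 /I2 h2; exact: IJ h1 h2.
have u12 : uniq (undup F1 ++ undup F2).
  rewrite cat_uniq u1 u2 andbT /=; apply/hasPn => i Hi; apply/negP => H.
  exact: dis H Hi.
rewrite (@core [::] _ _ _ u12 (measurable_mergeB _ _ mB1 mB2)).
rewrite (@core [::] _ _ _ u1 mB1) (@core [::] _ _ _ u2 mB2) -EFinM big_cat.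
congr (_%:E); congr (_ * _); apply: eq_big_seq => -[x b] Hi.
- have Hn : (x, b) \notin undup F2 by apply/negP; exact: dis Hi.
  by case: b Hi Hn => Hi Hn; rewrite /ev /mergeK /mergeB /= Hi (negbTE Hn) setIT.
- have Hn : (x, b) \notin undup F1 by apply/negP => H; exact: dis H Hi.
  by case: b Hi Hn => Hi Hn; rewrite /ev /mergeK /mergeB /= Hi (negbTE Hn) setTI.
Qed.

Lemma indep_step1 I J : (forall i, I i -> J i -> False) ->
  forall B0, PiO J B0 -> forall A, <<s PiO I >> A ->
  P (A `&` B0) = (P A * P B0)%E.
Proof.
move=> IJ B0 HB0; have mB0 := PiO_meas HB0.
pose r := NngNum (fine_ge0 (measure_ge0 P B0)).
suff H : forall A, <<s PiO I >> A -> mrestr P mB0 A = mscale r P A.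
  move=> A HA; have := H A HA; rewrite /mrestr /mscale /= => ->.
  by rewrite -Pfin // muleC.
apply: (g_sigma_algebra_measure_unique (PiO I) (@PiO_meas I) (fun _ => setT)).
- by move=> _; exact: PiO_setT.
- by apply/seteqP; split => // w _; exists 0%N.
- exact: PiO_setI.
- move=> A HA.
  transitivity (P (A `&` B0)); first by [].
  transitivity ((fine (P B0))%:E * P A)%E; last by [].
  rewrite (indep_base IJ HA HB0).
  have mA := PiO_meas HA.
  by rewrite -Pfin // muleC.
- by move=> k; rewrite /mrestr; apply: Plty; exact: measurableI.
Qed.

Lemma indep_sigma I J : (forall i, I i -> J i -> False) ->
  forall A B, <<s PiO I >> A -> <<s PiO J >> B ->
  P (A `&` B) = (P A * P B)%E.
Proof.
move=> IJ A B HA HB; have mA := sPiO_meas HA.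
pose r := NngNum (fine_ge0 (measure_ge0 P A)).
suff H : forall B, <<s PiO J >> B -> mrestr P mA B = mscale r P B.
  have := H B HB; rewrite /mrestr /mscale /= => E.
  rewrite setIC E.
  by rewrite -Pfin.
apply: (g_sigma_algebra_measure_unique (PiO J) (@PiO_meas J) (fun _ => setT)).
- by move=> _; exact: PiO_setT.
- by apply/seteqP; split => // w _; exists 0%N.
- exact: PiO_setI.
- move=> B' HB'.
  transitivity (P (B' `&` A)); first by [].
  transitivity ((fine (P A))%:E * P B')%E; last by [].
  rewrite setIC (indep_step1 IJ HB' HA).
  by rewrite -Pfin.
- by move=> k; rewrite /mrestr; apply: Plty; exact: measurableI.
Qed.

Definition Iu (u : word) : set (word * bool) := [set i | exists x, i.1 = u ++ x].

Lemma PiL_mono I J : I `<=` J -> @PiL R I `<=` @PiL R J.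
Proof.
move=> IJ _ [F [K [B [HF mB ->]]]]; exists F, K, B; split => //.
by move=> i /HF; exact: IJ.
Qed.

Lemma sPiO_mono I J : I `<=` J -> <<s PiO I >> `<=` <<s PiO J >>.
Proof.
move=> IJ; apply: sub_smallest2r; first exact: smallest_sigma_algebra.
by move=> _ [S HS <-]; exists S => //; exact: PiL_mono HS.
Qed.

Lemma sPiO_setI I A B : <<s PiO I >> A -> <<s PiO I >> B ->
  <<s PiO I >> (A `&` B).
Proof. exact: (@measurableI _ (g_sigma_algebraType (PiO I))). Qed.

Lemma fam_sigma u (S : set L) : measurable S ->
  <<s PiO (Iu u) >> (fam u @^-1` S).
Proof.
move=> mS.
have : preimage_set_system setT (fam u) (@measurable _ L) (fam u @^-1` S).
  by exists S => //; rewrite setTI.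
rewrite -g_sigma_preimageE.
apply: smallest_sub; first exact: smallest_sigma_algebra.
move=> _ [S' GS' <-]; apply: sub_sigma_algebra; rewrite setTI.
case: GS' => [[x [k ->]]|[x [B [mB ->]]]].
- exists (cyl [:: (u ++ x, false)] (fun _ => [set k]) (fun _ => setT)).
    exists [:: (u ++ x, false)], (fun _ => [set k]), (fun _ => setT); split => //.
    by move=> i; rewrite mem_seq1 => /eqP ->; exists x.
  apply/seteqP; split => w /=.
    by move/(_ (u ++ x, false)); rewrite mem_seq1 eqxx => /(_ isT).
  by move=> Hk i; rewrite mem_seq1 => /eqP ->.
- exists (cyl [:: (u ++ x, true)] (fun _ => setT) (fun _ => B)).
    exists [:: (u ++ x, true)], (fun _ => setT), (fun _ => B); split => //.
    by move=> i; rewrite mem_seq1 => /eqP ->; exists x.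
  apply/seteqP; split => w /=.
    by move/(_ (u ++ x, true)); rewrite mem_seq1 eqxx => /(_ isT).
  by move=> Hk i; rewrite mem_seq1 => /eqP ->.
Qed.

Lemma root_sigma (K : set nat) :
  <<s PiO [set ([::], false)] >> (N [::] @^-1` K).
Proof.
apply: sub_sigma_algebra.
exists (cyl [:: ([::], false)] (fun _ => K) (fun _ => setT)).
  exists [:: ([::], false)], (fun _ => K), (fun _ => setT); split => //.
  by move=> i; rewrite mem_seq1 => /eqP ->.
apply/seteqP; split => w /=.
  by move/(_ ([::], false)); rewrite mem_seq1 eqxx => /(_ isT).
by move=> Hk i; rewrite mem_seq1 => /eqP ->.
Qed.

Lemma aeE (Q : Omega -> Prop) :
  {ae P, forall w, Q w} = P.-negligible (~` [set w | Q w]).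
Proof. by []. Qed.

Hypothesis p0 : p 0%N = 0.
Hypothesis p1 : p 1%N < 1.

Context (phi phi' : lab R -> R).
Hypothesis mphi : lab_measurable phi.
Hypothesis mphi' : lab_measurable phi'.
Hypothesis phi_pos : forall t, 0 < phi t.
Hypothesis phi'_pos : forall t, 0 < phi' t.

Definition ratio (t : L) : R := phi' (prune t) / phi (prune t).

Lemma ratio_gt0 t : 0 < ratio t.
Proof. by rewrite /ratio divr_gt0. Qed.

Lemma measurable_h (a : R) :
  @measurable_fun _ _ L R setT (fun t => phi' (prune t) - a * phi (prune t)).
Proof.
have m1 := measurableT_comp (@measurable_phi R phi' mphi') (@measurable_prune R).
have m2 := measurableT_comp (@measurable_phi R phi mphi) (@measurable_prune R).
have m3 := measurable_funM (@measurable_cst _ _ L R setT a) m2.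
exact: (measurable_funB m1 m3).
Qed.

Definition Sle (a : R) : set L := [set t | ratio t <= a].

Lemma measurable_Sle (a : R) : measurable (Sle a).
Proof.
have -> : Sle a = setT `&`
    (fun t => phi' (prune t) - a * phi (prune t)) @^-1` `]-oo, 0].
  apply/seteqP; split => t /=.
    rewrite /Sle /ratio /= ler_pdivrMr // => H; split => //.
    by rewrite /= in_itv /= subr_le0.
  by move=> [_]; rewrite /= in_itv /= subr_le0 /Sle /ratio /= ler_pdivrMr.
apply: (measurable_h a) => //; exact: measurable_itv.
Qed.

Lemma stepA :
  {ae P, forall w, forall x, in_tree (gw_tree N G w).1 x ->
      flow_of phi (gw_tree N G w) x = flow_of phi' (gw_tree N G w) x} ->
  {ae P, forall w, (2 <= N [::] w)%N ->
      ratio (fam [:: 1%N] w) = ratio (fam [:: 2%N] w)}.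
Proof.
move=> Hf; apply: filterS Hf => w H H2.
set T := gw_tree N G w.
have in1 : in_tree T.1 [:: 1%N] by rewrite /= andbT; exact: leq_trans H2.
have in2 : in_tree T.1 [:: 2%N] by rewrite /= andbT.
have sub1 : subtree T [:: 1%N] = prune (fam [:: 1%N] w) := @subtree_prune R (fun x => N x w, fun x => G x w) [:: 1%N] in1.
have sub2 : subtree T [:: 2%N] = prune (fam [:: 2%N] w) := @subtree_prune R (fun x => N x w, fun x => G x w) [:: 2%N] in2.
have e1 := H _ in1; have e2 := H _ in2.
rewrite /= !mulr1 in e1 e2.
set S := \sum_(1 <= j < (T.1 [::]).+1) phi (subtree T [:: j]) in e1 e2.
set S' := \sum_(1 <= j < (T.1 [::]).+1) phi' (subtree T [:: j]) in e1 e2.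
have hT1 : (1 < (T.1 [::]).+1)%N by rewrite ltnS; exact: leq_trans H2.
have Spos : 0 < S.
  rewrite /S big_ltn //.
  have := phi_pos (subtree T [:: 1%N]).
  have : 0 <= \sum_(2 <= j < (T.1 [::]).+1) phi (subtree T [:: j]).
    by apply: sumr_ge0 => j _; exact: ltW.
  lra.
have S'pos : 0 < S'.
  rewrite /S' big_ltn //.
  have := phi'_pos (subtree T [:: 1%N]).
  have : 0 <= \sum_(2 <= j < (T.1 [::]).+1) phi' (subtree T [:: j]).
    by apply: sumr_ge0 => j _; exact: ltW.
  lra.
rewrite /ratio -sub1 -sub2.
have a1 := phi_pos (subtree T [:: 1%N]).
have a2 := phi_pos (subtree T [:: 2%N]).
have E1 : phi' (subtree T [:: 1%N]) = phi (subtree T [:: 1%N]) / S * S'.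
  by rewrite e1 divfK // gt_eqF.
have E2 : phi' (subtree T [:: 2%N]) = phi (subtree T [:: 2%N]) / S * S'.
  by rewrite e2 divfK // gt_eqF.
have aux x : x != 0 -> x / S * S' / x = S' / S.
  by move=> hx; rewrite mulrAC [x / S / x]mulrAC divff // mul1r mulrC.
by rewrite E1 E2 !aux // gt_eqF.
Qed.

Lemma pN2 : P (N [::] @^-1` [set k | (2 <= k)%N]) != 0%E.
Proof.
have eC : N [::] @^-1` [set k | (2 <= k)%N] =
    ~` ([set w | N [::] w = 0%N] `|` [set w | N [::] w = 1%N]).
  apply/seteqP; split => w /=.
    by case: (N [::] w) => [|[|n]] //= _ [].
  by case: (N [::] w) => [|[|n]] //= H; exfalso; apply: H; [left|right].
have dis : [set w | N [::] w = 0%N] `&` [set w | N [::] w = 1%N] = set0.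
  by apply/seteqP; split => w // [/= ->].
have eU : P ([set w | N [::] w = 0%N] `|` [set w | N [::] w = 1%N]) =
    (P [set w | N [::] w = 0%N] + P [set w | N [::] w = 1%N])%E.
  exact: measureU.
rewrite eC probability_setC; last exact: measurableU.
rewrite eU !PN p0 add0e.
have -> : (1 - (p 1%N)%:E)%E = (1 - p 1%N)%:E by [].
by rewrite eqe subr_eq0 eq_sym (lt_eqF p1).
Qed.

Lemma dich :
  {ae P, forall w, (2 <= N [::] w)%N ->
      ratio (fam [:: 1%N] w) = ratio (fam [:: 2%N] w)} ->
  forall a, P (fam [::] @^-1` Sle a) = 0%E \/ P (fam [::] @^-1` ~` Sle a) = 0%E.
Proof.
move=> HA a.
have mS := measurable_Sle a.
set E1 := fam [:: 1%N] @^-1` Sle a.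
set E2 := fam [:: 2%N] @^-1` ~` Sle a.
set E3 := N [::] @^-1` [set k | (2 <= k)%N].
have mE1 : measurable E1 by exact: measurable_fam_pre.
have mE2 : measurable E2 by apply: measurable_fam_pre; exact: measurableC.
have mE3 : measurable E3 by exact: mNset.
have h0 : P (E1 `&` E2 `&` E3) = 0%E.
  apply/(negligibleP _ _); first by apply: measurableI => //; exact: measurableI.
  apply: negligibleS HA => w [[h1 h2] h3] /= Hq.
  by apply: h2; rewrite /Sle /= -(Hq h3).
have d12 : forall i, Iu [:: 1%N] i -> Iu [:: 2%N] i -> False.
  by move=> i [x Hx] [x' Hx']; move: Hx'; rewrite Hx => -[].
have d3 : forall i, (Iu [:: 1%N] `|` Iu [:: 2%N]) i -> [set ([::], false)] i -> False.
  by move=> i [[x Hx]|[x Hx]] Hi; rewrite Hi in Hx.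
have s1 := @fam_sigma [:: 1%N] _ mS.
have s2 := @fam_sigma [:: 2%N] _ (measurableC mS).
have I12 : P (E1 `&` E2) = (P E1 * P E2)%E := indep_sigma d12 s1 s2.
have s12 : <<s PiO (Iu [:: 1%N] `|` Iu [:: 2%N]) >> (E1 `&` E2).
  apply: sPiO_setI.
    by apply: (sPiO_mono _ s1); exact: subsetUl.
  by apply: (sPiO_mono _ s2); exact: subsetUr.
have I3 : P (E1 `&` E2 `&` E3) = (P (E1 `&` E2) * P E3)%E :=
  indep_sigma d3 s12 (root_sigma _).
move: h0; rewrite I3 I12 => /eqP; rewrite !mule_eq0 (negbTE pN2) orbF.
case/orP => /eqP h; [left|right].
  by rewrite -(@law [:: 1%N] _ mS).
by rewrite -(@law [:: 2%N] _ (measurableC mS)).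
Qed.

Lemma setT_not_negligible : ~ P.-negligible setT.
Proof.
move=> /(negligibleP _ measurableT) h.
have /eqP := etrans (esym (probability_setT P)) h.
by rewrite onee_eq0.
Qed.

Lemma fwd :
  {ae P, forall w, forall x, in_tree (gw_tree N G w).1 x ->
      flow_of phi (gw_tree N G w) x = flow_of phi' (gw_tree N G w) x} ->
  exists c : R, 0 < c /\
    {ae P, forall w, phi' (gw_tree N G w) = c * phi (gw_tree N G w)}.
Proof.
move=> Hf.
have HD := dich (stepA Hf).
pose Z := [set a : R | P (fam [::] @^-1` Sle a) = 0%E].
have mF a : measurable (fam [::] @^-1` Sle a).
  exact: measurable_fam_pre (measurable_Sle a).
have mFc a : measurable (fam [::] @^-1` ~` Sle a).
  exact: measurable_fam_pre (measurableC (measurable_Sle a)).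
have Z0 : Z 0.
  rewrite /Z /=.
  have -> : fam [::] @^-1` Sle 0 = set0; last exact: measure0.
  apply/seteqP; split => w //=; rewrite /Sle /= leNgt ratio_gt0.
  by [].
have Zmono a b : a <= b -> Z b -> Z a.
  move=> ab Zb; apply: (subset_measure0 (mF a) (mF b)) => // w.
  rewrite /Sle /= => h; exact: le_trans h ab.
have [n Hn] : exists n : nat, ~ Z n%:R.
  apply: contrapT => Hall.
  have Hz k : Z k%:R by apply: contrapT => hk; apply: Hall; exists k.
  apply: setT_not_negligible.
  apply: (negligibleS _ (negligible_bigcup (F := fun k => fam [::] @^-1` Sle k%:R) _)).
    move=> w _; exists (Num.Def.trunc (ratio (fam [::] w))).+1 => //.
    exact/ltW/truncnS_gt.
  by move=> k; apply/(negligibleP _ (mF _)); exact: Hz.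
have ubZ : ubound Z n%:R.
  move=> a Za; rewrite leNgt; apply/negP => lt; apply: Hn.
  exact: Zmono (ltW lt) Za.
have hs : has_sup Z by split; [exists 0; exact: Z0|exists n%:R].
pose c := sup Z.
have Hae : {ae P, forall w, ratio (fam [::] w) = c}.
  rewrite aeE.
  pose Lo k := fam [::] @^-1` Sle (c - k.+1%:R^-1).
  pose Hi k := fam [::] @^-1` ~` Sle (c + k.+1%:R^-1).
  apply: (negligibleS _ (negligible_bigcup (F := fun k => Lo k `|` Hi k) _)).
    move=> w /= Hne.
    case: (ltgtP (ratio (fam [::] w)) c) => [lt|gt|eq]; last by [].
    + have [k Hk] := ltr_add_invr lt; exists k => //; left.
      rewrite /Lo /Sle /=; move: (k.+1%:R^-1) Hk => e Hk; lra.
    + have [k Hk] := ltr_add_invr gt; exists k => //; right.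
      rewrite /Hi /Sle /=; move: (k.+1%:R^-1) Hk => e Hk h; lra.
  move=> k; apply: negligibleU.
  + apply/(negligibleP _ (mF _)).
    have ek : 0 < k.+1%:R^-1 :> R by rewrite invr_gt0.
    have [e Ze lte] := sup_adherent ek hs.
    exact: Zmono (ltW lte) Ze.
  + apply/(negligibleP _ (mFc _)).
    have ek : 0 < k.+1%:R^-1 :> R by rewrite invr_gt0.
    have nZ : ~ Z (c + k.+1%:R^-1).
      move=> Zc; have := sup_upper_bound hs Zc; rewrite -/c; move: (k.+1%:R^-1) ek => e ek h; lra.
    by case: (HD (c + k.+1%:R^-1)).
have [w0 Hw0] : exists w, ratio (fam [::] w) = c.
  apply: contrapT => Hno; apply: setT_not_negligible.
  move: Hae; rewrite aeE; apply: negligibleS => w _ Heq; apply: Hno.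
  by exists w.
exists c; split; first by rewrite -Hw0 ratio_gt0.
apply: filterS Hae => w Hw.
rewrite -Hw /ratio divfK //; exact: lt0r_neq0.
Qed.

Lemma bwd (c : R) : 0 < c ->
  {ae P, forall w, phi' (gw_tree N G w) = c * phi (gw_tree N G w)} ->
  {ae P, forall w, forall x, in_tree (gw_tree N G w).1 x ->
      flow_of phi (gw_tree N G w) x = flow_of phi' (gw_tree N G w) x}.
Proof.
move=> c0 H.
pose Bad : set L := [set t | phi' (prune t) != c * phi (prune t)].
have mBad : measurable Bad.
  have -> : Bad = setT `&`
      (fun t => phi' (prune t) - c * phi (prune t)) @^-1` (~` [set 0]).
    apply/seteqP; split => t /=.
      by move=> h; split => //; apply/eqP; rewrite subr_eq0.
    by move=> [_ /eqP]; rewrite subr_eq0.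
  apply: (measurable_h c) => //; apply: measurableC; exact: measurable_set1.
have P0 : P (fam [::] @^-1` Bad) = 0%E.
  apply/(negligibleP _ (measurable_fam_pre _ mBad)).
  move: H; rewrite aeE; apply: negligibleS => w /= /eqP.
  by [].
have Hv v : {ae P, forall w, phi' (prune (fam v w)) = c * phi (prune (fam v w))}.
  rewrite aeE.
  have : P.-negligible (fam v @^-1` Bad).
    apply/(negligibleP _ (measurable_fam_pre _ mBad)).
    exact: (etrans (@law v _ mBad) P0).
  apply: negligibleS => w /= hn; apply/eqP.
  exact: hn.
pose Q n w := match unpickle n with
   | Some v => in_tree (gw_tree N G w).1 v ->
       phi' (subtree (gw_tree N G w) v) = c * phi (subtree (gw_tree N G w) v)
   | None => True end.
have Hall : {ae P, forall w, forall n : nat, Q n w}.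
  rewrite aeE.
  apply: (negligibleS _ (negligible_bigcup (F := fun n => ~` [set w | Q n w]) _)).
    by move=> w /= /existsNP [n hn]; exists n.
  move=> n; rewrite -aeE /Q; case: (unpickle n) => [v|].
    apply: filterS (Hv v) => w Hw Hin.
    have Hin' : in_tree (fun x => N x w) v.
      by rewrite -(@in_tree_prune R (fun x => N x w, fun x => G x w)).
    rewrite (@subtree_prune R (fun x => N x w, fun x => G x w) v Hin').
    exact: Hw.
  by apply: (filterS _ filterT).
apply: filterS Hall => w Hw x Hx.
apply: (@flow_prop R phi phi' c) => //; first by rewrite gt_eqF.
move=> v Hin; have := Hw (pickle v); rewrite /Q pickleK; exact.
Qed.

End Omega.

Unset Implicit Arguments.

Theorem mainTheorem2 (R : realType) (d : measure_display)
  (Omega : measurableType d) (P : probability Omega R)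
  (p : nat -> R) (N : word -> Omega -> nat) (G : word -> Omega -> R)
  (phi phi' : lab R -> R) :
  (* reproduction law p: p_0 = 0, p_1 < 1, finite mean *)
  p 0%N = 0 -> p 1%N < 1 ->
  (exists M : R, forall n, \sum_(k < n) (k%:R * p k) <= M) ->
  (* Ulam-Harris family: N x ~ p, G x ~ Gamma := G [::] (i.i.d., >= 0),
     all mutually independent *)
  (forall x k, measurable [set w | N x w = k]) ->
  (forall x, measurable_fun setT (G x)) ->
  (forall x k, P [set w | N x w = k] = (p k)%:E) ->
  (forall x w, 0 <= G x w) ->
  (forall x (B : set R), measurable B ->
     P (G x @^-1` B) = P (G [::] @^-1` B)) ->
  mutually_independent P (gw_sigma N G) ->
  (* phi, phi' positive measurable *)
  lab_measurable phi -> lab_measurable phi' ->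
  (forall t, 0 < phi t) -> (forall t, 0 < phi' t) ->
  ({ae P, forall w, forall x, in_tree (gw_tree N G w).1 x ->
      flow_of phi (gw_tree N G w) x = flow_of phi' (gw_tree N G w) x}
   <->
   exists c : R, 0 < c /\
     {ae P, forall w, phi' (gw_tree N G w) = c * phi (gw_tree N G w)}).
Proof.
move=> p0 p1 _ mN mG PN _ PG ind mphi mphi' pos pos'; split.
  exact: (fwd mN mG PN PG ind p0 p1 mphi mphi' pos pos').
move=> [c [c0 H]].
exact: (bwd mN mG PN PG ind mphi mphi' c0 H).
Qed.
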